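(* Let $n$ and $k$ be odd integers with $k\ge 3$ and $n>2k+1$. Then there is a homomorphism $\mathrm{Pet}(n,k)\to C_n^{\,k}$.
   Context: For integers $n,k$ with $2<2k\le n$, the generalized Petersen graph $\mathrm{Pet}(n,k)$ has vertex set $\{u_0,\dots,u_{n-1}\}\cup\{v_0,\dots,v_{n-1}\}$ and edge set $\{u_iu_{i+1}\}\cup\{u_iv_i\}\cup\{v_iv_{i+k}\}$, indices modulo $n$. $C_n$ is the cycle of length $n$. For a graph $G$ and positive integer $m$, the power graph $G^m$ has vertex set $V(G)$, two distinct vertices being adjacent iff there is a walk of length exactly $m$ between them in $G$. A homomorphism $G\to H$ is a map $V(G)\to V(H)$ sending edges to edges. *)

(* Defs.v *)
From mathcomp Require Import all_boot.
Unset Printing Implicit Defensive.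

Definition cycle_graph (n : nat) : rel 'I_n :=
  fun i j => (j == (i.+1 %% n) :> nat) || (i == (j.+1 %% n) :> nat).

(* Generalized Petersen graph Pet(n,k): vertex (false, i) is u_i,
   vertex (true, i) is v_i. *)
Definition petersen (n k : nat) : rel (bool * 'I_n) :=
  fun x y =>
    match x, y with
    | (false, i), (false, j) =>
        (j == (i.+1 %% n) :> nat) || (i == (j.+1 %% n) :> nat)
    | (false, i), (true, j) | (true, i), (false, j) => i == j
    | (true, i), (true, j) =>
        (j == ((i + k) %% n) :> nat) || (i == ((j + k) %% n) :> nat)
    end.

Definition walk_len (T : Type) (e : rel T) (m : nat) (x y : T) : Prop :=
  exists s : seq T, size s = m /\ path e x s /\ last x s = y.

Definition power_graph (T : eqType) (e : rel T) (m : nat) (x y : T) : Prop :=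
  x != y /\ walk_len T e m x y.

Definition graph_hom (A B : Type) (eA : A -> A -> Prop) (eB : B -> B -> Prop)
  (f : A -> B) : Prop :=
  forall x y, eA x y -> eB (f x) (f y).

(* Main.v *)
Require Import Defs.
From mathcomp Require Import all_boot.
From mathcomp Require Import zify.

Lemma walk_sym (T : Type) (e : rel T) (esym : forall a b, e a b = e b a) m x y :
  walk_len T e m x y -> walk_len T e m y x.
Proof.
move=> [s [Hs [Hp Hl]]]; exists (rev (belast x s)); split.
  by rewrite size_rev size_belast.
split.
  rewrite -Hl rev_path; apply: sub_path Hp => a b /=; by rewrite esym.
case: s Hs Hp Hl => [|a s] _ _ /= <- //.
by rewrite rev_cons last_rcons.
Qed.

Lemma walk_cat (T : Type) (e : rel T) m p x y z :
  walk_len T e m x y -> walk_len T e p y z -> walk_len T e (m + p) x z.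
Proof.
move=> [s [Hs [Hp Hl]]] [t [Ht [Hq Hm]]]; exists (s ++ t).
by rewrite size_cat Hs Ht cat_path last_cat Hl Hp Hq Hm.
Qed.

Section Cyc.
Variable n' : nat.
Local Notation N := n'.+1.
Local Notation e := (cycle_graph N).

Lemma e_sym (a b : 'I_N) : e a b = e b a.
Proof. by rewrite /cycle_graph orbC. Qed.

Lemma e_succ (a : 'I_N) : e a (ordS a).
Proof. by rewrite /cycle_graph /= eqxx. Qed.

Lemma fwd_walk m (x : 'I_N) : exists y : 'I_N,
  val y = (x + m) %% N /\ walk_len _ e m x y.
Proof.
elim: m x => [|m IH] x.
  by exists x; rewrite addn0 modn_small //; split => //; exists [::].
have [y [Hy Hw]] := IH (ordS x).
exists y; split.
  by rewrite Hy /= modnDml addSnnS.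
rewrite -[m.+1]add1n; apply: walk_cat Hw; exists [:: ordS x]; by rewrite /= e_succ.
Qed.

Lemma pad_walk m j (x y : 'I_N) : walk_len _ e m x y -> walk_len _ e (m + 2 * j) x y.
Proof.
move=> H; elim: j => [|j IH]; first by rewrite muln0 addn0.
rewrite mulnS addnCA addnC.
eapply walk_cat; [exact IH|]; exists [:: ordS y; y] => /=.
by rewrite e_succ e_sym e_succ.
Qed.
End Cyc.

Theorem theorem5 (n k : nat) :
  odd n -> odd k -> 3 <= k -> 2 * k + 1 < n ->
  exists f : bool * 'I_n -> 'I_n,
    graph_hom (bool * 'I_n) 'I_n (fun x y => petersen n k x y)
              (power_graph _ (cycle_graph n) k) f.
Proof.
case: n => [//|n'] On Ok Hk Hn.
have kE : k = 1 + 2 * k./2.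
  by rewrite -[k in LHS]odd_double_half Ok add1n -muln2 mulnC.
have fwd : forall (x y : 'I_n'.+1) d, (d == 1) || (d == k) ->
    val y = (x + d) %% n'.+1 -> power_graph _ (cycle_graph n'.+1) k x y.
  move=> x y d Hd Hy.
  have Hx := ltn_ord x; have Hy' := ltn_ord y.
  split.
    apply/eqP => Exy; move: Hy; rewrite -Exy.
    have Hd' : 0 < d < n'.+1 by case/orP: Hd => /eqP ->; lia.
    have Hq : (x + d) %/ n'.+1 < 2 by rewrite ltn_divLR //; lia.
    have E := divn_eq (x + d) n'.+1.
    move: Hq E; case: ((x + d) %/ n'.+1) => [|[|q]] //= _; lia.
  have [z [Hz Hw]] := fwd_walk n' d x.
  have -> : y = z by apply: val_inj; rewrite /= Hy Hz.
  case/orP: Hd => /eqP Ed; subst d; first by rewrite {1}kE; apply: pad_walk.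
  done.
have bwd : forall (x y : 'I_n'.+1) d, (d == 1) || (d == k) ->
    val x = (y + d) %% n'.+1 -> power_graph _ (cycle_graph n'.+1) k x y.
  move=> x y d Hd Hx; have [H1 H2] := fwd _ _ _ Hd Hx.
  split; first by rewrite eq_sym.
  by apply: walk_sym H2; apply: e_sym.
exists (fun v => if v.1 then ordS v.2 else v.2).
move=> [[] i] [[] j] /=.
- case/orP => /eqP H.
  + apply: (fwd _ _ k) => //; first by rewrite eqxx orbT.
    by rewrite /= H modnDml -[_.+1]addn1 modnDml addn1 addSn.
  + apply: (bwd _ _ k) => //; first by rewrite eqxx orbT.
    by rewrite /= H modnDml -[_.+1]addn1 modnDml addn1 addSn.
- move/eqP => ->; apply: (bwd _ _ 1) => //; by rewrite addn1.
- move/eqP => ->; apply: (fwd _ _ 1) => //; by rewrite addn1.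
- case/orP => /eqP H.
  + apply: (fwd _ _ 1) => //; by rewrite addn1.
  + apply: (bwd _ _ 1) => //; by rewrite addn1.
Qed.
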